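(* If $T$ is a tree of order $n\geq 3$ with maximum degree $\Delta(T)$, then $px_k(T)=\Delta(T)$ for each integer $k$ with $3\leq k\leq n$.
   Context: All graphs are finite, simple, undirected and connected. An edge-coloring of a graph assigns a color to each edge (adjacent edges may receive the same color). A tree in an edge-colored graph is proper if any two adjacent edges of the tree receive different colors. For $S\subseteq V(G)$, an $S$-tree is a subgraph of $G$ that is a tree containing all vertices of $S$. For a connected graph $G$ of order $n$ and an integer $k$ with $2\le k\le n$, an edge-coloring of $G$ is a $k$-proper coloring if for every set $S$ of $k$ vertices of $G$ there exists a proper $S$-tree in $G$. The $k$-proper index $px_k(G)$ is the minimum number of colors used in a $k$-proper coloring of $G$. *)

(* Defs.v *)
From mathcomp Require Import all_boot.
Set Implicit Arguments. Unset Strict Implicit. Unset Printing Implicit Defensive.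

Section Graphs.
Variable V : finType.

Definition simple_graph (adj : rel V) : Prop :=
  symmetric adj /\ irreflexive adj.

Definition acyclic (eH : rel V) : Prop :=
  forall s : seq V, uniq s -> 2 < size s -> ~~ cycle eH s.

Definition is_tree (VH : {set V}) (eH : rel V) : Prop :=
  VH != set0 /\
  (forall x y, x \in VH -> y \in VH -> connect eH x y) /\
  acyclic eH.

Definition subgraph (adj : rel V) (VH : {set V}) (eH : rel V) : Prop :=
  symmetric eH /\ (forall x y, eH x y -> [&& adj x y, x \in VH & y \in VH]).

Definition edge_coloring (adj : rel V) (m : nat) (c : V -> V -> 'I_m) : Prop :=
  forall x y, adj x y -> c x y = c y x.

Definition proper_sub {m} (c : V -> V -> 'I_m) (eH : rel V) : Prop :=
  forall x y z, eH x y -> eH x z -> y != z -> c x y != c x z.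

Definition k_proper_coloring (adj : rel V) (k m : nat) (c : V -> V -> 'I_m)
  : Prop :=
  edge_coloring adj c /\
  forall S : {set V}, #|S| = k ->
    exists (VH : {set V}) (eH : rel V),
      [/\ subgraph adj VH eH, S \subset VH, is_tree VH eH & proper_sub c eH].

Definition is_px (adj : rel V) (k m : nat) : Prop :=
  (exists c : V -> V -> 'I_m, k_proper_coloring adj k c) /\
  (forall m', m' < m -> forall c : V -> V -> 'I_m', ~ k_proper_coloring adj k c).

Definition deg (adj : rel V) (v : V) : nat := #|[set w | adj v w]|.

Definition max_degree (adj : rel V) : nat := \max_(v : V) deg adj v.

End Graphs.

(* Main.v *)
Require Import Defs.
From mathcomp Require Import all_boot.
Set Implicit Arguments. Unset Strict Implicit. Unset Printing Implicit Defensive.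

Section Helpers.
Variable V : finType.

Lemma no_cyc (e : rel V) v a (p : seq V) : acyclic e -> uniq (v :: a :: p) ->
  e v a -> path e a p -> e (last a p) v -> p != [::] -> False.
Proof.
move=> ac u eva pa el; case: p pa el u => [//|b p] pa el u _.
have := ac [:: v, a, b & p] u isT.
rewrite /cycle rcons_cons /= rcons_path; move: pa el => /= /andP [-> ->] ->.
by rewrite eva.
Qed.

Lemma tree_path (adj eH : rel V) v a b : symmetric adj -> irreflexive adj ->
  acyclic adj -> subrel eH adj -> adj v a -> adj v b -> a != b ->
  connect eH a b -> eH a v.
Proof.
move=> sy ir ac sub va vb ab /connectP [p pp eb].
case/shortenP: pp eb => p' pp' u' _ eb.
case: (boolP (v \in p')) => vp.
- case/splitPr: vp pp' u' => p1 p2 pp' u'.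
  rewrite cat_path /= in pp'; case/and3P: pp' => pp1 el _.
  case: p1 pp1 el u' => [//|c p1] pp1 el u'.
  exfalso; apply: (@no_cyc adj v a (c :: p1) ac) => //.
  + move: u'; rewrite -cat_cons cat_uniq => /and3P [u1 hn _].
    rewrite /= in hn; rewrite cons_uniq u1 andbT.
    by apply: contra hn => ->.
  + exact: sub_path pp1.
  + exact: sub el.
- exfalso; apply: (@no_cyc adj v a p' ac) => //.
  + rewrite cons_uniq u' andbT inE negb_or vp andbT.
    by apply: contraTneq va => ->; rewrite ir.
  + exact: sub_path pp'.
  + by rewrite -eb sy.
  + by apply: contraNneq ab => p0; rewrite eb p0.
Qed.

Lemma exists_superset (A : {set V}) k : #|A| <= k <= #|V| ->
  exists S : {set V}, #|S| = k /\ A \subset S.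
Proof.
case/andP=> h1 h2; rewrite -(subnKC h1) in h2 *.
move: (k - #|A|) h2 => d h2; clear h1 k.
elim: d A h2 => [|d IH] A h2.
  by exists A; rewrite addn0 subxx.
have : ~~ ([set: V] \subset A).
  apply/negP=> /subset_leq_card; rewrite cardsT; move: h2; rewrite addnS.
  move=> h3 h4; have := leq_trans h3 h4; by rewrite ltnNge leq_addr.
case/subsetPn => x _ xA.
have [|S [cS sS]] := IH (x |: A); first by rewrite cardsU1 xA add1n addSnnS.
exists S; split; first by rewrite cS cardsU1 xA add1n addSnnS.
by apply: subset_trans sS; apply: subsetU1.
Qed.
End Helpers.

Section Upper.
Variable V : finType.
Variable adj : rel V.
Hypothesis sy : symmetric adj.
Hypothesis ir : irreflexive adj.
Hypothesis ac : acyclic adj.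
Hypothesis conn : forall x y, connect adj x y.
Variable r : V.
Local Notation D := (max_degree adj).

Definition rA (A : {set V}) := [rel x y | [&& adj x y, x \in A & y \in A]].

Lemma rA_sym A : symmetric (rA A).
Proof. by move=> x y /=; rewrite sy [(x \in A) && _]andbC. Qed.

Lemma cross (A : {set V}) w : r \in A -> w \notin A ->
  exists u w', [/\ u \in A, w' \notin A & adj u w'].
Proof.
move=> rAA wA.
case: (boolP [exists u, exists w', [&& u \in A, w' \notin A & adj u w']]).
  by move/existsP=> [u /existsP [w' /and3P [h1 h2 h3]]]; exists u, w'.
move=> /negP nex; exfalso.
have cl : closed adj (mem A).
  move=> x y exy; case xA: (x \in A); case yA: (y \in A) => //.
  - by exfalso; apply: nex; apply/existsP; exists x; apply/existsP; exists y; rewrite xA yA exy.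
  - by exfalso; apply: nex; apply/existsP; exists y; apply/existsP; exists x; rewrite xA yA sy exy.
have := closed_connect cl (conn r w).
by rewrite rAA (negbTE wA).
Qed.

Lemma pathA (A : {set V}) x p : path (rA A) x p -> all (fun y => y \in A) p.
Proof.
elim: p x => //= y p IH x /andP [/and3P [_ _ yA] pp].
by rewrite yA (IH y).
Qed.

Lemma unique_nb (A : {set V}) w u u' :
  (forall x, x \in A -> connect (rA A) r x) -> w \notin A ->
  u \in A -> u' \in A -> adj u w -> adj u' w -> u = u'.
Proof.
move=> cA wA uA u'A uw u'w; case: (eqVneq u u') => // neq; exfalso.
have syR := sym_connect_sym (rA_sym A).
have cu : connect (rA A) u u'.
  by apply: connect_trans (cA _ u'A); rewrite syR; apply: cA.
case/connectP: cu => p pp eb.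
case/shortenP: pp eb => p' pp' u1 _ eb.
apply: (@no_cyc _ adj w u p' ac) => //.
- rewrite cons_uniq u1 andbT inE negb_or.
  have := pathA pp'; move/allP => hA.
  apply/andP; split; first by apply: contraNneq wA => ->.
  by apply/negP => /hA; rewrite (negbTE wA).
- by rewrite sy.
- by apply: sub_path pp' => x y /and3P [].
- by rewrite -eb.
- by apply: contraNneq neq => p0; rewrite eb p0.
Qed.

Definition good (A : {set V}) (c : V -> V -> 'I_D) :=
  (forall x y, c x y = c y x) /\
  (forall x y z, x \in A -> y \in A -> z \in A -> adj x y -> adj x z ->
     y != z -> c x y != c x z).

Definition inv (A : {set V}) :=
  r \in A /\ forall x, x \in A -> connect (rA A) r x.

Hypothesis Dpos : 0 < D.

Lemma grow n : 0 < n <= #|V| ->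
  exists A : {set V}, [/\ #|A| = n, inv A & exists c, good A c].
Proof.
elim: n => [//|n IH] /andP [_ hn].
case: n IH hn => [|n] IH hn.
  exists [set r]; split; first exact: cards1.
    split; first by rewrite inE.
    by move=> x; rewrite inE => /eqP ->; apply: connect0.
  exists (fun _ _ => Ordinal Dpos); split => // x y z.
  by rewrite !inE => /eqP -> /eqP -> _; rewrite ir.
have [|A [cA [rAA cAc] [c [csym cpr]]]] := IH; first by rewrite /= (ltnW hn).
have : ~~ ([set: V] \subset A).
  by apply/negP=> /subset_leq_card; rewrite cardsT cA leqNgt hn.
case/subsetPn => w0 _ w0A.
have [u [w [uA wA uw]]] := cross rAA w0A.
have uniq_nb : forall x, x \in A -> adj x w -> x = u.
  by move=> x xA xw; apply: (unique_nb cAc wA xA uA xw uw).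
pose U := [set c u y | y in [set y in A | adj u y]].
have cU : #|U| < D.
  apply: leq_ltn_trans (leq_imset_card _ _) _.
  have sub : [set y in A | adj u y] \subset [set y | adj u y] :\ w.
    apply/subsetP => y; rewrite !inE => /andP [yA ->]; rewrite andbT.
    by apply: contraNneq wA => <-.
  apply: leq_ltn_trans (subset_leq_card sub) _.
  have := cardsD1 w [set y | adj u y]; rewrite inE uw add1n => e.
  have : deg adj u <= D by apply: leq_bigmax.
  by rewrite /deg e.
have : ~~ ([set: 'I_D] \subset U).
  by apply/negP=> /subset_leq_card; rewrite cardsT card_ord leqNgt cU.
case/subsetPn => col _ colU.
pose c' := fun x y => if ((x == u) && (y == w)) || ((x == w) && (y == u))
                      then col else c x y.
have uw' : u != w by apply: contraNneq wA => <-.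
have c'A : forall x y, x != w -> y != w -> c' x y = c x y.
  move=> x y xw yw; rewrite /c' (negbTE xw) (negbTE yw) /=.
  by rewrite !andbF.
have sA : subrel (rA A) (rA (w |: A)).
  move=> x y /and3P [h1 h2 h3]; by rewrite /= h1 !inE h2 h3 !orbT.
exists (w |: A); split.
- by rewrite cardsU1 wA cA.
- split; first by rewrite inE rAA orbT.
  move=> x; rewrite !inE => /orP [/eqP ->|xA].
    apply: (connect_trans (y := u)).
      by apply: (connect_sub (e := rA A)) (cAc _ uA) => a b /sA; apply: connect1.
    by apply: connect1; rewrite /= uw !inE eqxx uA orbT.
  by apply: (connect_sub (e := rA A)) (cAc _ xA) => a b /sA; apply: connect1.
exists c'; split.
  move=> x y; rewrite /c' csym.
  by case: (x == u); case: (x == w); case: (y == u); case: (y == w).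
move=> x y z xA' yA' zA' xy xz yz.
case: (eqVneq x w) => [xw|xw].
  subst x.
  have yA : y \in A by move: yA'; rewrite !inE => /orP [/eqP yw|//]; move: xy; rewrite yw ir.
  have zA : z \in A by move: zA'; rewrite !inE => /orP [/eqP zw|//]; move: xz; rewrite zw ir.
  have yu : y = u by apply: uniq_nb yA _; rewrite sy.
  have zu : z = u by apply: uniq_nb zA _; rewrite sy.
  by move: yz; rewrite yu zu eqxx.
have xA : x \in A by move: xA'; rewrite !inE (negbTE xw).
case: (eqVneq y w) => [yw|yw].
  subst y; have xu := uniq_nb _ xA xy; subst x.
  have zw : z != w by rewrite eq_sym.
  have zA : z \in A by move: zA'; rewrite !inE (negbTE zw).
  rewrite [c' u z]c'A // /c' !eqxx /=.
  apply: contraNneq colU => ->; apply/imsetP; exists z => //.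
  by rewrite inE zA xz.
case: (eqVneq z w) => [zw|zw].
  subst z; have xu := uniq_nb _ xA xz; subst x.
  have yA : y \in A by move: yA'; rewrite !inE (negbTE yw).
  rewrite [c' u y]c'A // /c' !eqxx /=.
  apply: contraNneq colU => <-; apply/imsetP; exists y => //.
  by rewrite inE yA xy.
have yA : y \in A by move: yA'; rewrite !inE (negbTE yw).
have zA : z \in A by move: zA'; rewrite !inE (negbTE zw).
by rewrite !c'A //; apply: cpr.
Qed.

End Upper.

Theorem mainTheorem9 (V : finType) (adj : rel V) :
  simple_graph adj ->
  is_tree [set: V] adj ->
  3 <= #|V| ->
  forall k : nat, 3 <= k <= #|V| ->
    is_px adj k (max_degree adj).
Proof.
move=> [sy ir] tr n3 k /andP [k3 kn].
have [_ [conn ac]] := tr.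
have conn' : forall x y, connect adj x y.
  by move=> x y; apply: conn; rewrite inE.
have : 0 < #|V| by apply: leq_trans n3.
case/card_gt0P => r _.
have : ~~ ([set: V] \subset [set r]).
  apply/negP=> /subset_leq_card; rewrite cardsT cards1 => h.
  by have := leq_trans n3 h.
case/subsetPn => w0 _ w0r.
have [u [w' [_ _ uw]]] := cross sy conn' (set11 r) w0r.
have Dpos : 0 < max_degree adj.
  apply: (leq_trans _ (@leq_bigmax _ (deg adj) u)).
  by apply/card_gt0P; exists w'; rewrite inE.
split.
  have [|A [cA _ [c [csym cpr]]]] := @grow V adj sy ir ac conn' r Dpos #|V|.
    by rewrite leqnn andbT; apply: leq_trans n3.
  have AT : A = [set: V].
    by apply/eqP; rewrite eqEcard subsetT cardsT cA leqnn.
  exists c; split; first by move=> x y _; apply: csym.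
  move=> S _; exists [set: V], adj; split.
  - by split => // x y h; rewrite h !inE.
  - by apply/subsetP => x; rewrite inE.
  - exact: tr.
  - by move=> x y z xy xz yz; apply: cpr; rewrite // AT inE.
move=> m' lm c [_ kp].
have [v ev] := @eq_bigmax V (deg adj) (leq_trans (isT : 0 < 3) n3).
rewrite /max_degree ev in lm.
pose N := [set w | adj v w].
have inj : {in N &, injective (c v)}.
  move=> a b; rewrite !inE => va vb cab; apply/eqP; apply/negPn/negP => ab.
  have [|S [cS sS]] := @exists_superset V [set a; b] k.
    by rewrite kn andbT cards2; apply: leq_ltn_trans (leq_b1 _) (ltnW k3).
  have [VH [eH [[esym esub] SVH [_ [conH _]] pr]]] := kp S cS.
  have sub : subrel eH adj by move=> x y /esub /and3P [].
  have aVH : a \in VH by apply: (subsetP (subset_trans sS SVH)); rewrite !inE eqxx.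
  have bVH : b \in VH by apply: (subsetP (subset_trans sS SVH)); rewrite !inE eqxx orbT.
  have ha := tree_path sy ir ac sub va vb ab (conH a b aVH bVH).
  have ba : b != a by rewrite eq_sym.
  have hb := tree_path sy ir ac sub vb va ba (conH b a bVH aVH).
  have := pr v a b; rewrite esym ha esym hb => /(_ isT isT ab).
  by rewrite cab eqxx.
have := card_in_imset inj.
have := max_card (c v @: N); rewrite card_ord => h1 h2.
by move: lm; rewrite /deg -/N -h2 ltnNge h1.
Qed.
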